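(* For all integers $k\ge 2$ and $n\ge 1$, $$\mathrm{spt}(k-1)'_{do}(n-1)-\mathrm{spt}k'_{do}(n)=\mathrm{spt}(k-1)'_{do}(n-2k+1)+p'_{do}(n-2k+1),$$ and $$\mathrm{spt}k_{do}(n)+\mathrm{spt}(k-1)_{do}(n-1)=\mathrm{spt}(k-1)_{do}(n-2k+1)+2p_{de}(n-k)+p_{do}(n-2k+1).$$
   Context: For a partition $\pi$, $s(\pi)$ is its smallest part. For $j\ge1$, $\mathrm{Spt}j_{do}(n)$ is the set of partitions $\pi$ of $n$ in which $s(\pi)$ occurs exactly $j$ times and the remaining parts (those larger than $s(\pi)$) are pairwise distinct and each has parity different from that of $s(\pi)$. $B_0(j,n)$ (resp. $B_1(j,n)$) is the number of $\pi\in\mathrm{Spt}j_{do}(n)$ whose number of parts greater than $s(\pi)$ is even (resp. odd). $\mathrm{spt}j_{do}(n)=B_0(j,n)+B_1(j,n)$ and $\mathrm{spt}j'_{do}(n)=B_0(j,n)-B_1(j,n)$; all of these are $0$ for $n\le 0$. $p_{de}(n)$ (resp. $p_{do}(n)$) is the number of partitions of $n$ into distinct even (resp. distinct odd) parts; $p'_{do}(n)$ is the number of partitions of $n$ into distinct odd parts with an even number of parts minus the number with an odd number of parts. These three functions equal $1$ at $n=0$ and $0$ for $n<0$. *)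

(* Defs.v *)
From mathcomp Require Import all_boot all_order all_algebra.
Set Implicit Arguments. Unset Strict Implicit. Unset Printing Implicit Defensive.
Import Order.TTheory GRing.Theory Num.Theory.

(* A partition of n is encoded by its multiplicity function m : part -> count,
   with parts and counts in {0,..,n}; m i = number of occurrences of the part i. *)
Definition ptn (n : nat) := {ffun 'I_n.+1 -> 'I_n.+1}.

Definition is_ptn n (m : ptn n) : bool :=
  ((m ord0 : nat) == 0%N) && (\sum_(i < n.+1) (i : nat) * (m i : nat) == n)%N.

Definition sptdo_cond (j : nat) n (m : ptn n) (s : 'I_n.+1) : bool :=
  [&& is_ptn m, (m s : nat) == j,
      [forall i : 'I_n.+1, ((i : nat) < s)%N ==> ((m i : nat) == 0%N)] &
      [forall i : 'I_n.+1, ((s : nat) < i)%N ==>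
          (((m i : nat) <= 1)%N && (((m i : nat) == 1%N) ==> (odd i != odd s)))]].

Definition nbig n (m : ptn n) (s : 'I_n.+1) : nat :=
  (\sum_(i < n.+1 | (s : nat) < i) (m i : nat))%N.

Definition B_nat (b : bool) (j n : nat) : nat :=
  #|[set m : ptn n | [exists s : 'I_n.+1, sptdo_cond j m s && (odd (nbig m s) == b)]]|.

Local Open Scope ring_scope.

Definition B0 (j : nat) (n : int) : int :=
  if n <= 0 then 0 else (B_nat false j `|n|%N)%:Z.
Definition B1 (j : nat) (n : int) : int :=
  if n <= 0 then 0 else (B_nat true j `|n|%N)%:Z.

Definition sptdo (j : nat) (n : int) : int := B0 j n + B1 j n.
Definition sptdo' (j : nat) (n : int) : int := B0 j n - B1 j n.

Definition nparts n (m : ptn n) : nat := (\sum_(i < n.+1) (m i : nat))%N.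

Definition distinct_parity_ptn (b : bool) n (m : ptn n) : bool :=
  is_ptn m && [forall i : 'I_n.+1,
     ((m i : nat) <= 1)%N && (((m i : nat) == 1%N) ==> (odd i == b))].

Definition pde (n : int) : int :=
  if n < 0 then 0
  else (#|[set m : ptn `|n|%N | distinct_parity_ptn false m]|)%:Z.
Definition pdo (n : int) : int :=
  if n < 0 then 0
  else (#|[set m : ptn `|n|%N | distinct_parity_ptn true m]|)%:Z.
Definition pdo' (n : int) : int :=
  if n < 0 then 0
  else \sum_(m : ptn `|n|%N | distinct_parity_ptn true m) (-1) ^+ nparts m.

(* Main.v *)
Require Import Defs.
From mathcomp Require Import all_boot all_order all_algebra.
From mathcomp Require Import zify ring lra.
Import Order.TTheory GRing.Theory Num.Theory.
Set Implicit Arguments. Unset Strict Implicit. Unset Printing Implicit Defensive.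
Local Open Scope ring_scope.

Fixpoint Wf (f : nat) (z : int) (a N : nat) : int :=
  if (N < a)%N then (N == 0%N)%:Z else
  match f with 0 => 0 | f'.+1 => Wf f' z a.+2 N + z * Wf f' z a.+2 (N - a) end.

Lemma Wf_stable z f : forall a N g, (N < a + 2 * f)%N -> (f <= g)%N ->
  Wf g z a N = Wf f z a N.
Proof.
elim: f => [|f IH] a N g hN hg.
  rewrite addn0 in hN; case: g hg => [|g] _ /=; by rewrite hN.
case: g hg => [|g] // hg /=; case: ifP => // hNa.
rewrite (IH a.+2 N g); [|lia|lia]. rewrite (IH a.+2 (N - a)%N g) //; lia.
Qed.

Definition W z a N := Wf N.+1 z a N.

Lemma W_small z a N : (N < a)%N -> W z a N = (N == 0%N)%:Z.
Proof. by rewrite /W /= => ->. Qed.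

Lemma W_rec z a N : (1 <= a)%N ->
  W z a N = W z a.+2 N + z * (if (a <= N)%N then W z a.+2 (N - a) else 0).
Proof.
move=> ha; case: (ltnP N a) => hNa.
  by rewrite !W_small ?mulr0 ?addr0 //; lia.
rewrite /W [in LHS]/= ifF; last by apply/negbTE; rewrite -leqNgt.
rewrite (Wf_stable z (f:=N) (g:=N.+1) (a := a.+2) (N := N)); last by lia. 2: lia.
congr (_ + z * _).
rewrite -(Wf_stable z (f:=(N - a)%N.+1) (g:=N)) //; lia.
Qed.

Definition Wi z a (N : int) : int := if N < 0 then 0 else W z a `|N|%N.

Lemma Wi_rec z a N : (1 <= a)%N ->
  Wi z a N = Wi z a.+2 N + z * Wi z a.+2 (N - a%:Z).
Proof.
move=> ha; rewrite /Wi; case: N => [N|N] /=; last first.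
  have -> : Negz N - a%:Z < 0 by lia.
  by rewrite mulr0 addr0.
rewrite (W_rec z N ha); congr (_ + z * _).
case: (leqP a N) => h.
  rewrite subzn // ltz_nat /=; done.
have -> : N%:Z - a%:Z < 0 by lia.
done.
Qed.

Definition upd n (m : ptn n) (a v : 'I_n.+1) : ptn n :=
  [ffun i => if i == a then v else m i].
Definition sw n (m : ptn n) (a u v : 'I_n.+1) : ptn n :=
  upd m a (if m a == u then v else if m a == v then u else m a).

Lemma sw_at n (m : ptn n) a u v :
  sw m a u v a = if m a == u then v else if m a == v then u else m a.
Proof. by rewrite /sw /upd ffunE eqxx. Qed.

Lemma sw_ne n (m : ptn n) a u v i : i != a -> sw m a u v i = m i.
Proof. by move=> h; rewrite /sw /upd ffunE (negbTE h). Qed.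

Lemma swK n (a u v : 'I_n.+1) : u != v -> involutive (fun m : ptn n => sw m a u v).
Proof.
move=> huv m; apply/ffunP => i.
case: (eqVneq i a) => [->|hi]; last by rewrite !sw_ne.
rewrite !sw_at.
case: (eqVneq (m a) u) => [->|hu]; first by rewrite eq_sym (negbTE huv) eqxx.
case: (eqVneq (m a) v) => [->|hv]; first by rewrite eqxx.
by rewrite (negbTE hu) (negbTE hv).
Qed.

Lemma sum_sw n (a u v : 'I_n.+1) (P : pred (ptn n)) (F : ptn n -> int) : u != v ->
  \sum_(m | P m) F m = \sum_(m | P (sw m a u v)) F (sw m a u v).
Proof. by move=> huv; exact: (reindex_inj (can_inj (swK a huv))). Qed.

Lemma sum_upd n (m : ptn n) (a u v : 'I_n.+1) (G : 'I_n.+1 -> nat -> nat) :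
  (\sum_i G i (sw m a u v i) + G a (m a) = \sum_i G i (m i) + G a (sw m a u v a))%N.
Proof.
rewrite (bigD1 a) //= [in RHS](bigD1 a) //=.
rewrite (eq_bigr (fun i => G i (m i))) => [|i hi]; last by rewrite sw_ne.
lia.
Qed.

Definition good n (a N : nat) (m : ptn n) : bool :=
  [forall i : 'I_n.+1, ((m i : nat) <= 1)%N && (((m i : nat) == 1%N) ==> ((a <= i)%N && (odd i == odd a)))]
  && ((\sum_(i < n.+1) (i : nat) * (m i : nat))%N == N).

Definition Cz n (z : int) a N : int := \sum_(m : ptn n | good a N m) z ^+ nparts m.

Lemma goodP n a N (m : ptn n) :
  reflect ((forall i : 'I_n.+1, (m i <= 1)%N /\ ((m i : nat) = 1%N -> (a <= i)%N /\ odd i = odd a))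
           /\ (\sum_(i < n.+1) (i : nat) * (m i : nat))%N = N) (good a N m).
Proof.
apply: (iffP andP) => [[/forallP H /eqP hs]|[H hs]]; split => //.
- move=> i; have /andP[h1 /implyP h2] := H i; split => // e.
  by have /andP[h3 /eqP h4] := h2 (introT eqP e).
- apply/forallP => i; have [h1 h2] := H i; rewrite h1 /=; apply/implyP => /eqP e.
  by have [h3 h4] := h2 e; rewrite h3 h4 eqxx.
- by apply/eqP.
Qed.

Lemma par_step a i : (a <= i)%N -> i <> a -> odd i = odd a -> (a.+2 <= i)%N.
Proof.
move=> h1 h2 h3; case: (eqVneq i a.+1) => [e|e].
  by move: h3; rewrite e /=; case: (odd a).
lia.
Qed.

Lemma ord_eq n (i j : 'I_n.+1) : (i == j) = ((i : nat) == j).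
Proof. by []. Qed.

Lemma good_split0 n a N (m : ptn n) (a0 : 'I_n.+1) : (a0 : nat) = a ->
  good a N m && ((m a0 : nat) == 0%N) = good a.+2 N m.
Proof.
move=> ha0; apply/idP/idP.
- case/andP => /goodP[H hs] /eqP h0; apply/goodP; split => // i.
  have [h1 h2] := H i; split => // e; have [h3 h4] := h2 e.
  split; last by rewrite /= negbK.
  apply: par_step => // hia.
  have hi : i = a0 by apply/val_inj; rewrite /= hia ha0.
  by rewrite hi h0 in e.
- move=> /goodP[H hs]; apply/andP; split.
    apply/goodP; split => // i; have [h1 h2] := H i; split => // e.
    have [h3 h4] := h2 e; split; first lia.
    by rewrite h4 /= negbK.
  have [h1 h2] := H a0; apply/eqP.
  have : (m a0 : nat) <> 1%N by move=> e; have [h3 _] := h2 e; lia.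
  lia.
Qed.

Lemma good_split1 n a N (m : ptn n) (a0 u : 'I_n.+1) : (a0 : nat) = a -> (u : nat) = 1%N ->
  good a N (sw m a0 u ord0) && ((sw m a0 u ord0 a0 : nat) != 0%N)
  = (a <= N)%N && good a.+2 (N - a) m.
Proof.
move=> ha0 hu.
have hsum := sum_upd m a0 u ord0 (fun i x => (i : nat) * x)%N.
cbv beta in hsum.
have hsa := sw_at m a0 u ord0.
apply/idP/idP.
- case/andP => /goodP[H hs] hnz.
  have [h1 h2] := H a0.
  have hm0 : (m a0 : nat) = 0%N.
    move: hsa hnz h1; case: (eqVneq (m a0) u) => [e1|n1] -> /=; first by [].
    case: (eqVneq (m a0) ord0) => [-> //|n2] hx1 hx2.
    have : (m a0 : nat) = 1%N by lia.
    by move=> e; move: n1; rewrite ord_eq e hu.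
  have hs1 : (sw m a0 u ord0 a0 : nat) = 1%N by lia.
  rewrite hm0 hs1 hs ha0 in hsum.
  apply/andP; split; first lia.
  apply/goodP; split; last first. move: hsum. set S := (\sum_(i < n.+1) _)%N. move=> hsum. lia.
  move=> i; case: (eqVneq i a0) => [->|hi]; first by rewrite hm0.
  have [h3 h4] := H i; rewrite sw_ne // in h3 h4; split => // e.
  have [h5 h6] := h4 e; split; last by rewrite /= negbK.
  apply: par_step => // hia; move/negP: hi; apply; apply/eqP/val_inj; rewrite /= hia ha0 //.
- case/andP => haN /goodP[H hs].
  have [h1 h2] := H a0.
  have hm0 : (m a0 : nat) = 0%N.
    have : (m a0 : nat) <> 1%N by move=> e; have [h3 _] := h2 e; lia.
    lia.
  have hs1 : (sw m a0 u ord0 a0 : nat) = 1%N.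
    rewrite hsa !ord_eq hu hm0 /=; done.
  rewrite hs1 andbT; apply/goodP; split; last first.
    rewrite hm0 hs1 ha0 in hsum; move: hsum hs haN.
    set S1 := (\sum_(i < n.+1) i * m i)%N. set S2 := (\sum_(i < n.+1) _)%N. lia.
  move=> i; case: (eqVneq i a0) => [->|hi].
    by rewrite hs1 ha0; split => // _; split.
  rewrite sw_ne //; have [h3 h4] := H i; split => // e.
  have [h5 h6] := h4 e; split; first lia.
  by rewrite h6 /= negbK.
Qed.

Lemma big_cond_const n (c : bool) (P : pred (ptn n)) (F : ptn n -> int) :
  \sum_(m | c && P m) F m = if c then \sum_(m | P m) F m else 0.
Proof. by case: c => //; rewrite big_pred0. Qed.

Lemma nparts_sw n (m : ptn n) a u v :
  (nparts (sw m a u v) + m a = nparts m + sw m a u v a)%N.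
Proof. exact: (sum_upd m a u v (fun _ x => x)). Qed.

Lemma C_rec n z a N : (1 <= a <= n)%N ->
  Cz n z a N = Cz n z a.+2 N + z * (if (a <= N)%N then Cz n z a.+2 (N - a) else 0).
Proof.
case/andP => ha1 han.
pose a0 : 'I_n.+1 := inord a. have ha0 : (a0 : nat) = a by rewrite inordK.
pose u : 'I_n.+1 := inord 1. have hu : (u : nat) = 1%N by rewrite inordK; lia.
have hu0 : u != ord0 by rewrite ord_eq hu.
clearbody a0 u.
rewrite /Cz (bigID (fun m : ptn n => (m a0 : nat) == 0%N)) /=.
congr (_ + _).
  by apply: eq_bigl => m; exact: good_split0.
rewrite (sum_sw a0 _ _ hu0).
rewrite (eq_bigl (fun m => (a <= N)%N && good a.+2 (N - a) m)); last first.
  by move=> m; exact: good_split1.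
rewrite big_cond_const; case: ifP => _; last by rewrite mulr0.
rewrite mulr_sumr; apply: eq_bigr => m /goodP[H _].
have [h1 h2] := H a0.
have hm0 : (m a0 : nat) = 0%N.
  have : (m a0 : nat) <> 1%N by move=> e; have [h3 _] := h2 e; lia.
  by move: h1; case: (nat_of_ord (m a0)) => [|[|]].
have hs1 : (sw m a0 u ord0 a0 : nat) = 1%N.
  by rewrite sw_at !ord_eq hu hm0 /=.
have := nparts_sw m a0 u ord0; rewrite hm0 hs1 addn0 => ->.
by rewrite addn1 exprS.
Qed.

Lemma good_big n a N (m : ptn n) : (n < a)%N -> good a N m -> forall i, (m i : nat) = 0%N.
Proof.
move=> hna /goodP[H _] i; have [h1 h2] := H i.
have : (m i : nat) <> 1%N by move=> e; have [h3 _] := h2 e; have := ltn_ord i; lia.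
lia.
Qed.

Lemma C_big n z a N : (n < a)%N -> Cz n z a N = (N == 0%N)%:Z.
Proof.
move=> hna; rewrite /Cz.
pose m0 : ptn n := [ffun _ => ord0].
case: (eqVneq N 0%N) => [->|hN].
  rewrite (big_pred1 m0) => [|m].
    rewrite /nparts big1 ?expr0 // => i _; by rewrite ffunE.
  rewrite /=; apply/idP/eqP => [hg|->].
    apply/ffunP => i; rewrite ffunE; apply/val_inj; exact: (good_big hna hg).
  apply/goodP; split; first by move=> i; rewrite ffunE.
  by rewrite big1 // => i _; rewrite ffunE muln0.
rewrite big_pred0 // => m; apply/negP => hg.
have := hg; move/goodP => [_ hs].
move: hN; rewrite -hs big1 ?eqxx // => i _; by rewrite (good_big hna hg) muln0.
Qed.

Lemma C_W n z a N : (1 <= a)%N -> (N <= n)%N -> Cz n z a N = W z a N.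
Proof.
move=> ha hN; move: {2}(n.+1 - a)%N (leqnn (n.+1 - a)) => d.
elim: d a N ha hN => [|d IH] a N ha hN hd.
  by rewrite C_big ?W_small //; lia.
case: (leqP a n) => han; last by rewrite C_big ?W_small //; lia.
rewrite C_rec ?ha ?han // W_rec // IH //; try lia.
case: ifP => // haN; rewrite IH //; lia.
Qed.

Lemma sptP j n (m : ptn n) (s : 'I_n.+1) :
  reflect [/\ (m ord0 : nat) = 0%N, (\sum_(i < n.+1) (i : nat) * (m i : nat))%N = n,
              (m s : nat) = j, (forall i : 'I_n.+1, (i < s)%N -> (m i : nat) = 0%N) &
              (forall i : 'I_n.+1, (s < i)%N -> (m i <= 1)%N /\ ((m i : nat) = 1%N -> odd i = ~~ odd s))]
    (sptdo_cond j m s).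
Proof.
apply: (iffP and4P) => [[/andP[/eqP h0 /eqP hs] /eqP hj /forallP H1 /forallP H2]|[h0 hs hj H1 H2]].
  split => // i hi.
    by have /implyP/(_ hi)/eqP := H1 i.
  have /implyP/(_ hi)/andP[h3 /implyP h4] := H2 i; split => // e.
  by have := h4 (introT eqP e); case: (odd i); case: (odd s).
split.
- by apply/andP; split; apply/eqP.
- by apply/eqP.
- apply/forallP => i; apply/implyP => hi; apply/eqP; exact: H1.
- apply/forallP => i; apply/implyP => hi; have [h3 h4] := H2 i hi.
  rewrite h3 /=; apply/implyP => /eqP e; rewrite (h4 e).
  by case: (odd s).
Qed.

Lemma spt_split n j (m : ptn n) (s j0 : 'I_n.+1) : (1 <= j)%N -> (j0 : nat) = j ->
  sptdo_cond j (sw m s j0 ord0) s = [&& (1 <= s)%N, (j * s <= n)%N & good s.+1 (n - j * s) m].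
Proof.
move=> hj hj0.
have hsum := sum_upd m s j0 ord0 (fun i x => (i : nat) * x)%N.
cbv beta in hsum.
have hsa := sw_at m s j0 ord0.
have hj00 : j0 != ord0 by rewrite ord_eq hj0 /=; lia.
apply/idP/idP.
- move=> /sptP[h0 hs hsj H1 H2].
  have hm0 : (m s : nat) = 0%N.
    move: hsa hsj; case: (eqVneq (m s) j0) => [e1|n1] -> /=; first by lia.
    case: (eqVneq (m s) ord0) => [-> //|n2] e.
    by move: n1; rewrite ord_eq e hj0 eqxx.
  have hs1 : (1 <= s)%N.
    case: (posnP s) => // e; exfalso.
    have e' : s = ord0 by apply/val_inj.
    by subst s; lia.
  rewrite hm0 hsj muln0 addn0 hs in hsum.
  rewrite hs1 /=; apply/andP; split.
    by move: hsum; set S1 := (\sum_(i < n.+1) _)%N; lia.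
  apply/goodP; split; last first.
    by move: hsum; set S1 := (\sum_(i < n.+1) _)%N; lia.
  move=> i; case: (ltngtP i s) => hi.
  + have := H1 i hi; rewrite sw_ne => [e|]; last by rewrite ord_eq; lia.
    by rewrite e.
  + have [h3 h4] := H2 i hi; rewrite sw_ne in h3 h4; last by rewrite ord_eq; lia.
    split => // e; split => //; by rewrite /= h4.
  + have -> : i = s by apply/val_inj.
    by rewrite hm0.
- case/and3P => hs1 hjs /goodP[H hs].
  have [h1 h2] := H s.
  have hm0 : (m s : nat) = 0%N.
    by move: h1 h2; case: (nat_of_ord (m s)) => [|[|]] // _ /(_ erefl) []; lia.
  have hsj : (sw m s j0 ord0 s : nat) = j.
    rewrite hsa; case: (eqVneq (m s) j0) => [e|_].
      by move: hm0; rewrite e hj0; lia.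
    have -> : m s = ord0 by apply/val_inj.
    by rewrite eqxx.
  have hm00 : forall i : 'I_n.+1, (i <= s)%N -> (m i : nat) = 0%N.
    move=> i hi; have [h3 h4] := H i.
    by move: h3 h4; case: (nat_of_ord (m i)) => [|[|]] // _ /(_ erefl) []; lia.
  rewrite hm0 hsj in hsum.
  apply/sptP; split => //.
  + rewrite sw_ne; first by apply: hm00.
    by rewrite ord_eq /=; lia.
  + by move: hsum hs hjs; set S1 := (\sum_(i < n.+1) i * m i)%N;
       set S2 := (\sum_(i < n.+1) _)%N; lia.
  + move=> i hi; rewrite sw_ne ?hm00 //; [lia | rewrite ord_eq; lia].
  + move=> i hi; rewrite sw_ne; last by rewrite ord_eq; lia.
    have [h3 h4] := H i; split => // e.
    by have [_ ->] := h4 e.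
Qed.

Lemma nbig_sw n N (m : ptn n) (s j0 : 'I_n.+1) : good s.+1 N m ->
  nbig (sw m s j0 ord0) s = nparts m.
Proof.
move=> /goodP[H _].
rewrite /nbig /nparts (bigID (fun i : 'I_n.+1 => (s < i)%N) xpredT) /=.
rewrite [X in _ = (_ + X)%N]big1 ?addn0 => [|i hi]; last first.
  have [h3 h4] := H i.
  by move: h3 h4; case: (nat_of_ord (m i)) => [|[|]] // _ /(_ erefl) []; lia.
apply: eq_bigr => i hi; rewrite sw_ne // ord_eq; lia.
Qed.

Lemma spt_s n z j (s : 'I_n.+1) : (1 <= j)%N ->
  \sum_(m : ptn n | sptdo_cond j m s) z ^+ nbig m s
  = if (1 <= s)%N && (j * s <= n)%N then Cz n z s.+1 (n - j * s) else 0.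
Proof.
move=> hj; case: (leqP j n) => hjn.
  pose j0 : 'I_n.+1 := inord j. have hj0 : (j0 : nat) = j by rewrite inordK.
  have hj00 : j0 != ord0 by rewrite ord_eq hj0 /=; lia.
  clearbody j0.
  rewrite (sum_sw s _ _ hj00).
  rewrite (eq_bigl (fun m => ((1 <= s)%N && (j * s <= n)%N) && good s.+1 (n - j * s) m)); last first.
    by move=> m; rewrite spt_split // andbA.
  rewrite big_cond_const; case: ifP => // _.
  by apply: eq_bigr => m hg; rewrite (nbig_sw _ hg).
rewrite big_pred0; last first.
  move=> m; apply/negP => /sptP[_ _ e _ _]; have := ltn_ord (m s); rewrite e => h; lia.
case: ifP => // /andP[h1 h2]; nia.
Qed.

Lemma spt_uniq n j (m : ptn n) s s' : (1 <= j)%N ->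
  sptdo_cond j m s -> sptdo_cond j m s' -> s = s'.
Proof.
move=> hj /sptP[_ _ e1 H1 _] /sptP[_ _ e2 H2 _]; apply/val_inj => /=.
case: (ltngtP s s') => // h.
  by have := H2 s h; lia.
by have := H1 s' h; lia.
Qed.

Lemma B_nat_sum b j n : (1 <= j)%N ->
  B_nat b j n = (\sum_(s < n.+1) \sum_(m : ptn n | sptdo_cond j m s && (odd (nbig m s) == b)) 1)%N.
Proof.
move=> hj; rewrite /B_nat -sum1_card.
rewrite (eq_bigr (fun s : 'I_n.+1 => \sum_(m : ptn n)
   (if sptdo_cond j m s && (odd (nbig m s) == b) then 1 else 0))%N); last first.
  by move=> s _; rewrite big_mkcond.
rewrite exchange_big /= big_mkcond /=; apply: eq_bigr => m _.
rewrite inE; case: existsP => [[s0 hs0]|hno].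
  rewrite (bigD1 s0) //= hs0 big1 // => s hs; case: ifP => // /andP[hc _].
  case/andP: hs0 => hc0 _; by rewrite (spt_uniq hj hc hc0) eqxx in hs.
rewrite big1 // => s _; case: ifP => // h; exfalso; apply: hno; by exists s.
Qed.

Definition Spt z j (n : int) : int := if n <= 0 then 0 else
  \sum_(s < `|n|.+1) \sum_(m : ptn `|n| | sptdo_cond j m s) z ^+ nbig m s.

Lemma sptdo_Spt j n : (1 <= j)%N -> sptdo j n = Spt 1 j n.
Proof.
move=> hj; rewrite /sptdo /B0 /B1 /Spt; case: ifP => // _.
rewrite !B_nat_sum // -!natz !natr_sum -big_split /=; apply: eq_bigr => s _.
rewrite [RHS](bigID (fun m : ptn _ => odd (nbig m s))) /= addrC !natr_sum.
congr (_ + _); apply: eq_big => m //.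
- by rewrite ?eqb_id ?eqbF_neg.
- by move=> _; rewrite expr1n.
- by rewrite ?eqb_id ?eqbF_neg.
- by move=> _; rewrite expr1n.
Qed.

Lemma sptdo'_Spt j n : (1 <= j)%N -> sptdo' j n = Spt (-1) j n.
Proof.
move=> hj; rewrite /sptdo' /B0 /B1 /Spt; case: ifP => // _.
rewrite !B_nat_sum // -!natz !natr_sum -sumrB /=; apply: eq_bigr => s _.
rewrite [RHS](bigID (fun m : ptn _ => odd (nbig m s))) /= addrC !natr_sum -sumrN.
congr (_ + _); apply: eq_big => m //.
- by rewrite ?eqb_id ?eqbF_neg.
- by move=> /andP[_ /eqP ho]; rewrite -signr_odd ho expr0.
- by rewrite ?eqb_id ?eqbF_neg.
- by move=> /andP[_ /eqP ho]; rewrite -signr_odd ho expr1.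
Qed.

Definition Vb z j (n : int) B := \sum_(1 <= s < B) Wi z s.+1 (n - (j * s)%:Z).

Lemma Wi_neg z a N : N < 0 -> Wi z a N = 0.
Proof. by rewrite /Wi => ->. Qed.

Lemma Vb_le0 z j n B : (1 <= j)%N -> n <= 0 -> Vb z j n B = 0.
Proof.
move=> hj hn; rewrite /Vb big_nat_cond big1 // => s /andP[/andP[h1 _] _].
apply: Wi_neg; nia.
Qed.

Lemma Vb_ext z j n B B' : (1 <= j)%N -> n < B%:Z -> (B <= B')%N -> Vb z j n B' = Vb z j n B.
Proof.
move=> hj hnB hBB; case: (posnP B) => hB.
  by rewrite !Vb_le0 //; lia.
rewrite /Vb (big_cat_nat _ (n := B)) //= [X in _ + X = _]big_nat_cond.
rewrite [X in _ + X = _]big1 ?addr0 //.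
move=> s /andP[/andP[h1 _] _]; apply: Wi_neg; nia.
Qed.

Lemma Spt_Vb z j n B : (1 <= j)%N -> n < B%:Z -> Spt z j n = Vb z j n B.
Proof.
move=> hj hnB; rewrite /Spt; case: ifP => hn; first by rewrite Vb_le0.
case: n hn hnB => [n'|n'] hn hnB //=.
rewrite (@Vb_ext z j n' n'.+1 B) //; last by lia.
rewrite (eq_bigr (fun s : 'I_n'.+1 => (fun s : nat =>
   if (1 <= s)%N then Wi z s.+1 (n'%:Z - (j * s)%:Z) else 0) s)); last first.
  move=> s _; rewrite spt_s //; case: (posnP s) => [->|hs] //=.
  case: (leqP (j * s) n') => hjs /=.
    by rewrite C_W ?leq_subr // /Wi subzn // ltz_nat /=.
  by rewrite Wi_neg //; lia.
rewrite -(big_mkord (fun _ => true) (fun s : nat => if (1 <= s)%N then Wi z s.+1 (n'%:Z - (j * s)%:Z) else 0)).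
rewrite big_ltn //= add0r /Vb.
by apply: eq_big_nat => s /andP[h1 _]; rewrite h1.
Qed.

Lemma main_id z k' (n : int) B : (0 < B)%N ->
  Vb z k' (n - 1) B.+2 + z * Vb z k'.+1 n B.+2
  = Vb z k' (n - 2 * (k'.+1)%:Z + 1) B + Wi z 1 (n - 2 * (k'.+1)%:Z + 1)
    + (1 + z) * Wi z 2 (n - (k'.+1)%:Z).
Proof.
move=> hB; rewrite /Vb.
have hR : \sum_(1 <= s < B) Wi z s.+1 (n - 2 * (k'.+1)%:Z + 1 - (k' * s)%:Z)
          + Wi z 1 (n - 2 * (k'.+1)%:Z + 1)
        = \sum_(0 <= s < B) Wi z s.+1 (n - 2 * (k'.+1)%:Z + 1 - (k' * s)%:Z).
  by rewrite (big_ltn (m:=0)) //= muln0 subr0 addrC.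
rewrite hR.
rewrite (big_ltn (m:=1)) // [X in _ + z * X](big_ltn (m:=1)) //.
rewrite !(big_addn 0 B.+2 2).
have -> : (B.+2 - 2 = B)%N by lia.
rewrite [in RHS](eq_bigr (fun i => Wi z (i + 2).+1 (n - 1 - (k' * (i + 2))%:Z)
                           + z * Wi z (i + 2).+1 (n - (k'.+1 * (i + 2))%:Z))); last first.
  move=> i _; rewrite Wi_rec //; congr (Wi _ _ _ + z * Wi _ _ _).
  - by rewrite addn2.
  - lia.
  - by rewrite addn2.
  - lia.
rewrite big_split /= -mulr_sumr.
have -> : Wi z 2 (n - 1 - (k' * 1)%:Z) = Wi z 2 (n - (k'.+1)%:Z) by congr (Wi _ _ _); lia.
have -> : Wi z 2 (n - (k'.+1 * 1)%:Z) = Wi z 2 (n - (k'.+1)%:Z) by congr (Wi _ _ _); lia.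
ring.
Qed.

Lemma dp_good b n (m : ptn n) :
  distinct_parity_ptn b m = good (if b then 1 else 2) n m.
Proof.
apply/idP/idP.
- case/andP => /andP[/eqP h0 /eqP hs] /forallP H; apply/goodP; split => // i.
  have /andP[h1 /implyP h2] := H i; split => // e.
  have /eqP ho := h2 (introT eqP e).
  have hi0 : (i : nat) <> 0%N.
    move=> e0; have ei : i = ord0 by apply/val_inj.
    by rewrite ei h0 in e.
  destruct b; simpl in ho |- *; split => //; first lia.
  case: (eqVneq (i : nat) 1%N) => [e1|e1]; first by rewrite e1 in ho.
  lia.
- move=> /goodP[H hs]; apply/andP; split.
    apply/andP; split; last by apply/eqP.
    have [h1 h2] := H ord0.
    move: h1 h2; case: (nat_of_ord (m ord0)) => [|[|]] //= _ /(_ erefl) [].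
    by destruct b.
  apply/forallP => i; have [h1 h2] := H i; rewrite h1 /=.
  apply/implyP => /eqP e; have [_ ->] := h2 e; by destruct b.
Qed.

Lemma pdo'_W N : pdo' N = Wi (-1) 1 N.
Proof.
rewrite /pdo' /Wi; case: ifP => // _.
rewrite -(@C_W `|N|%N) //; apply: eq_bigl => m; exact: (dp_good true m).
Qed.

Lemma card_Cz b N : (#|[set m : ptn N | distinct_parity_ptn b m]|)%:Z
  = Cz N 1 (if b then 1 else 2) N.
Proof.
rewrite /Cz -sum1_card -natz natr_sum; apply: eq_big => [m|m _].
  by rewrite inE dp_good.
by rewrite expr1n.
Qed.

Lemma pdo_W N : pdo N = Wi 1 1 N.
Proof.
rewrite /pdo /Wi; case: ifP => // _.
by rewrite (card_Cz true) C_W.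
Qed.

Lemma pde_W N : pde N = Wi 1 2 N.
Proof.
rewrite /pde /Wi; case: ifP => // _.
by rewrite (card_Cz false) C_W.
Qed.

Unset Implicit Arguments.

Theorem theorem3p1 (k n : nat) (hk : (2 <= k)%N) (hn : (1 <= n)%N) :
  sptdo' (k.-1) (n%:Z - 1) - sptdo' k n%:Z
    = sptdo' (k.-1) (n%:Z - 2 * k%:Z + 1) + pdo' (n%:Z - 2 * k%:Z + 1)
  /\
  sptdo k n%:Z + sptdo (k.-1) (n%:Z - 1)
    = sptdo (k.-1) (n%:Z - 2 * k%:Z + 1) + 2 * pde (n%:Z - k%:Z)
      + pdo (n%:Z - 2 * k%:Z + 1).
Proof.
case: k hk => [|k'] // hk /=.
have hk1 : (1 <= k')%N by lia.
have hk2 : (1 <= k'.+1)%N by lia.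
have hB : (0 < n.+1)%N by [].
have h1 : n%:Z - 1 < (n.+1.+2)%:Z by lia.
have h2 : n%:Z < (n.+1.+2)%:Z by lia.
have h3 : n%:Z - 2 * (k'.+1)%:Z + 1 < (n.+1)%:Z by lia.
rewrite !sptdo'_Spt // !sptdo_Spt // pdo'_W pdo_W pde_W.
rewrite (Spt_Vb (-1) hk1 h1) (Spt_Vb (-1) hk2 h2) (Spt_Vb (-1) hk1 h3) (Spt_Vb 1 hk2 h2) (Spt_Vb 1 hk1 h1) (Spt_Vb 1 hk1 h3).
have em := main_id (-1) k' n%:Z hB.
have ep := main_id 1 k' n%:Z hB.
split.
- move: em; set a := Vb _ _ _ _; set b := Vb _ _ _ _; set c := Vb _ _ _ _.
  set d := Wi _ _ _; set e := Wi _ _ _ => em.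
  lra.
- move: ep; set a := Vb _ _ _ _; set b := Vb _ _ _ _; set c := Vb _ _ _ _.
  set d := Wi _ _ _; set e := Wi _ _ _ => ep.
  lra.
Qed.
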